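(* Consider C-VFL (described in the context) and suppose Assumptions (A4)–(A5) of the context hold. Let $t$ be any iteration, $t_0$ the most recent communication iteration $\le t$, and $m\in\{0,\dots,M\}$. Let $\hat\Phi_m^t$ be party $m$'s view with compressed embeddings and $\Phi_m^t$ the corresponding view with uncompressed embeddings. Then $$\mathbb{E}\big\|\nabla_mF_{\mathcal B}(\hat\Phi_m^t)-\nabla_mF_{\mathcal B}(\Phi_m^t)\big\|^2\le H_m^2G_m^2\sum_{j=0,\,j\ne m}^M\mathcal{E}_j^{t_0}.$$
   Context: Setting. There are $M$ parties indexed $1,\dots,M$ and a server indexed $0$. Data samples $x^i=[x_1^i,\dots,x_M^i]$ with labels $y^i$ are vertically partitioned, party $m$ holding features $x_m^i$. Party $m\ge1$ has parameters $\theta_m$ and embedding function $h_m(\theta_m;x_m)\in\mathbb{R}^{P_m}$; the server has $\theta_0\in\mathbb{R}^{P_0}$ and $h_0(\theta_0;x):=\theta_0$. For a loss $l$ and a mini-batch $\mathcal B$ of $B$ samples, $F_{\mathcal B}(\Theta)=\frac1B\sum_{i\in\mathcal B}l(\theta_0,h_1(\theta_1;x_1^i),\dots,h_M(\theta_M;x_M^i);y^i)$. $h_m(\theta_m;X_m^{\mathcal B})$ denotes the $P_m\times B$ matrix of embeddings of the samples in $\mathcal B$. For a collection $\Phi$ of embeddings of parties $j\ne m$, $\nabla_mF_{\mathcal B}(\Phi)$ is the gradient in $\theta_m$ of the mini-batch loss in which party $m$'s embedding is $h_m(\theta_m;X_m^{\mathcal B})$ and the other embeddings are fixed to those of $\Phi$.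 Assumptions. (A4) There are $H_m>0$ with $\|\nabla^2_{h_m(\theta_m;X_m^{\mathcal B})}F_{\mathcal B}(\Theta)\|_{\mathcal F}\le H_m$ for all $\Theta$ and all mini-batches $\mathcal B$. (A5) There are $G_m>0$ with $\|\nabla_{\theta_m}h_m(\theta_m;X_m^{\mathcal B})\|_{\mathcal F}\le G_m$ for all $\theta_m$ and all $\mathcal B$. Algorithm C-VFL. Compressors $\mathcal C_m:\mathbb{R}^{P_m}\to\mathbb{R}^{P_m}$; $Q$ local iterations per round. At each communication iteration $t$ ($t\bmod Q=0$) a mini-batch $\mathcal B^t$ is sampled and $\hat\Phi^{t}=\{\mathcal C_0(\theta_0^t),\mathcal C_1(h_1(\theta_1^t;X_1^{\mathcal B^t})),\dots,\mathcal C_M(h_M(\theta_M^t;X_M^{\mathcal B^t}))\}$ is sent to all parties. With $t_0$ the most recent communication iteration $\le t$, $\hat\Phi_m^t$ is $\hat\Phi^{t_0}$ with its $m$-th entry replaced by $h_m(\theta_m^t;X_m^{\mathcal B^{t_0}})$, and each party updates $\theta_m^{t+1}=\theta_m^t-\eta^{t_0}\nabla_mF_{\mathcal B}(\hat\Phi_m^t;y^{\mathcal B^{t_0}})$. $\Phi_m^t$ is defined like $\hat\Phi_m^t$ but with the uncompressed entries $\theta_0^{t_0}$ and $h_j(\theta_j^{t_0};X_j^{\mathcal B^{t_0}})$ for $j\ne m$. All gradients here use the mini-batch $\mathcal B^{t_0}$ and party $m$'s current parameters $\theta_m^t$. Compression error. $\epsilon_j^{t_0}:=\mathcal C_j(h_j(\theta_j^{t_0};X_j^{\mathcal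 B^{t_0}}))-h_j(\theta_j^{t_0};X_j^{\mathcal B^{t_0}})$ ($P_j\times B$ matrix), $\mathcal{E}_j^{t_0}:=\mathbb{E}\|\epsilon_j^{t_0}\|_{\mathcal F}^2$. *)

(* Defs.v *)
From HB Require Import structures.
From mathcomp Require Import all_boot all_order all_algebra.
From mathcomp Require Import all_classical all_reals all_analysis.
Set Implicit Arguments. Unset Strict Implicit. Unset Printing Implicit Defensive.
Import Order.TTheory GRing.Theory Num.Theory.
Import numFieldNormedType.Exports.
Local Open Scope ring_scope.

(* ===== C-VFL setting.  Parties (incl. the server 0) are indexed by 'I_M.+1. ===== *)

(** Parameter dimension of party j: the server's parameter theta_0 lives in R^{P_0}. *)
Definition pdim (M : nat) (P D : 'I_M.+1 -> nat) (j : 'I_M.+1) : nat :=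
  if j == ord0 then P ord0 else D j.

Definition sqfrob (R : realType) m n (A : 'M[R]_(m, n)) : R :=
  \sum_(a < m) \sum_(i < n) A a i ^+ 2.

(** Batch embedding matrix h_j(theta_j; X_j^B) : P_j x B. *)
Definition batchEmb (R : realType) (M B : nat) (X : 'I_M.+1 -> Type)
    (Pj dj : nat) (j : 'I_M.+1) (hj : 'rV[R]_dj -> X j -> 'cV[R]_Pj)
    (theta : 'rV[R]_dj) (xs : 'I_B -> forall k, X k) : 'M[R]_(Pj, B) :=
  \matrix_(a < Pj, i < B) hj theta (xs i j) a 0.

Definition compress (R : realType) (Pj B : nat) (C : 'cV[R]_Pj -> 'cV[R]_Pj)
    (E : 'M[R]_(Pj, B)) : 'M[R]_(Pj, B) :=
  \matrix_(a < Pj, i < B) C (col i E) a 0.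

Definition stack (R : realType) (M B : nat) (P : 'I_M.+1 -> nat)
    (E : forall j : 'I_M.+1, 'M[R]_(P j, B)) : 'M[R]_(\sum_(j < M.+1) P j, B) :=
  mxcol E.

Definition FB (R : realType) (Ptot B : nat) (Y : Type) (l : 'cV[R]_Ptot -> Y -> R)
    (ys : 'I_B -> Y) (Phi : 'M[R]_(Ptot, B)) : R :=
  B%:R^-1 * \sum_(i < B) l (col i Phi) (ys i).

Definition edir (R : realType) (M B : nat) (P : 'I_M.+1 -> nat) (j : 'I_M.+1)
    (a : 'I_(P j)) (i : 'I_B) : 'M[R]_(\sum_(k < M.+1) P k, B) :=
  stack (dfwith (fun k : 'I_M.+1 => (0 : 'M[R]_(P k, B))) j (delta_mx a i : 'M[R]_(P j, B))).

(** Squared Frobenius norm of the (row block m of the) Hessian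
    nabla^2_{h_m} F_B at Phi: second derivatives d/d(entry of h_m) d/d(any embedding entry). *)
Definition hess_sqfrob (R : realType) (M B : nat) (P : 'I_M.+1 -> nat)
    (F : 'M[R]_(\sum_(k < M.+1) P k, B) -> R) (m : 'I_M.+1)
    (Phi : 'M[R]_(\sum_(k < M.+1) P k, B)) : R :=
  \sum_(a < P m) \sum_(i < B) \sum_(j < M.+1) \sum_(b < P j) \sum_(k < B)
    (derive (fun Psi => derive F Psi (@edir R M B P m a i)) Phi (@edir R M B P j b k)) ^+ 2.

Definition jac_sqfrob (R : realType) (d p n : nat) (g : 'rV[R]_d -> 'M[R]_(p, n))
    (theta : 'rV[R]_d) : R :=
  \sum_(c < d) sqfrob (derive g theta (delta_mx 0 c)).

Definition grad (R : realType) (d : nat) (f : 'rV[R]_d -> R) (theta : 'rV[R]_d) : 'rV[R]_d :=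
  \row_(c < d) derive f theta (delta_mx 0 c).

(** nabla_m F_B(Phi): gradient in theta_m of the mini-batch loss in which party m's
    embedding is h_m(theta_m; X_m^B) and the other embeddings are fixed to those of Phi. *)
Definition gradm (R : realType) (M B : nat) (X : 'I_M.+1 -> Type) (Y : Type)
    (P D : 'I_M.+1 -> nat)
    (h : forall j, 'rV[R]_(pdim P D j) -> X j -> 'cV[R]_(P j))
    (l : 'cV[R]_(\sum_(j < M.+1) P j) -> Y -> R) (m : 'I_M.+1)
    (xs : 'I_B -> forall k, X k) (ys : 'I_B -> Y)
    (Phi : forall j : 'I_M.+1, 'M[R]_(P j, B)) (theta : 'rV[R]_(pdim P D m))
    : 'rV[R]_(pdim P D m) :=
  grad (fun th => FB l ys (stack (dfwith Phi m (@batchEmb R M B X (P m) (pdim P D m) m (h m) th xs))))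
    theta.

Definition embU (R : realType) (M B N : nat) (d : measure_display) (Omega : measurableType d)
    (X : 'I_M.+1 -> Type) (P D : 'I_M.+1 -> nat)
    (h : forall j, 'rV[R]_(pdim P D j) -> X j -> 'cV[R]_(P j))
    (xdat : 'I_N -> forall k, X k) (bat : nat -> Omega -> 'I_B -> 'I_N)
    (theta : forall j, nat -> Omega -> 'rV[R]_(pdim P D j)) (t0 : nat) (w : Omega)
    : forall j : 'I_M.+1, 'M[R]_(P j, B) :=
  fun j => @batchEmb R M B X (P j) (pdim P D j) j (h j) (theta j t0 w)
             (fun i => xdat (bat t0 w i)).

Definition embC (R : realType) (M B N : nat) (d : measure_display) (Omega : measurableType d)
    (X : 'I_M.+1 -> Type) (P D : 'I_M.+1 -> nat)
    (h : forall j, 'rV[R]_(pdim P D j) -> X j -> 'cV[R]_(P j))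
    (xdat : 'I_N -> forall k, X k) (bat : nat -> Omega -> 'I_B -> 'I_N)
    (C : forall j : 'I_M.+1, nat -> Omega -> 'cV[R]_(P j) -> 'cV[R]_(P j))
    (theta : forall j, nat -> Omega -> 'rV[R]_(pdim P D j)) (t0 : nat) (w : Omega)
    : forall j : 'I_M.+1, 'M[R]_(P j, B) :=
  fun j => compress (C j t0 w) (embU h xdat bat theta t0 w j).

Arguments gradm {R M B X Y P D} h l m xs ys Phi theta.

(* Main.v *)
Require Import Defs.
From HB Require Import structures.
From mathcomp Require Import all_boot all_order all_algebra.
From mathcomp Require Import all_classical all_reals all_analysis.
From mathcomp Require Import measurable_realfun.
From mathcomp Require Import ring lra.
Import Order.TTheory GRing.Theory Num.Theory.
Import numFieldNormedType.Exports.
Local Open Scope ring_scope.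

Section Helpers.
Context {R : realType}.
Local Open Scope classical_set_scope.
Local Open Scope ring_scope.

Lemma CS (I : finType) (x y : I -> R) :
  (\sum_i x i * y i) ^+ 2 <= (\sum_i x i ^+ 2) * (\sum_i y i ^+ 2).
Proof.
set X := \sum_i x i ^+ 2; set Y := \sum_i y i ^+ 2; set Z := \sum_i x i * y i.
have Y0 : 0 <= Y by apply: sumr_ge0 => i _; exact: sqr_ge0.
have H0 : 0 <= \sum_i (Y * x i - Z * y i) ^+ 2.
  by apply: sumr_ge0 => i _; exact: sqr_ge0.
have E : \sum_i (Y * x i - Z * y i) ^+ 2 = Y ^+ 2 * X - 2%:R * Y * Z * Z + Z ^+ 2 * Y.
  rewrite (eq_bigr (fun i => (Y ^+ 2 * x i ^+ 2 - 2%:R * Y * Z * (x i * y i)) + Z ^+ 2 * y i ^+ 2)); last first.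
    by move=> i _; ring.
  by rewrite big_split /= sumrB -!mulr_sumr.
rewrite E in H0.
have [Yz|Yp] := eqVneq Y 0.
  have y0 : forall i, y i = 0.
    move=> i; apply/eqP; rewrite -sqrf_eq0; apply/eqP.
    move/eqP: Yz; rewrite psumr_eq0; last by move=> j _; exact: sqr_ge0.
    by move=> /allP /(_ i (mem_index_enum i)) /implyP /(_ isT) /eqP.
  have -> : Z = 0 by rewrite /Z big1 // => i _; rewrite y0 mulr0.
  by rewrite expr0n /= mulr_ge0 // ?sumr_ge0 // => i _; exact: sqr_ge0.
have Ypos : 0 < Y by rewrite lt_def Yp Y0.
have : 0 <= Y * (X * Y - Z ^+ 2) by lra.
by rewrite pmulr_rge0 // subr_ge0.
Qed.

Lemma derive_comp_aff (V W U : normedModType R) (g : W -> U) (A : V -> W) x v w :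
  (forall h : R, A (h *: v + x) = h *: w + A x) ->
  'D_v (g \o A) x = 'D_w g (A x) /\ (derivable g (A x) w -> derivable (g \o A) x v).
Proof.
move=> HA.
have E : (fun h : R => h^-1 *: ((g \o A \o shift x) (h *: v) - (g \o A) x)) =
         (fun h : R => h^-1 *: ((g \o shift (A x)) (h *: w) - g (A x))).
  by apply: funext => h /=; rewrite HA.
split; first by rewrite /derive E.
by rewrite /derivable E.
Qed.

Lemma diff_mx (V : normedModType R) m n (f : V -> 'M[R]_(m, n)) x :
  (forall r k, differentiable (fun y => f y r k) x) ->
  differentiable f x /\ forall v, 'd f x v = \matrix_(r, k) 'd (fun y => f y r k) x v.
Proof.
move=> Hd.
have Df : differentiable f x.
  have -> : f = \sum_(r < m) \sum_(k < n) (fun y => f y r k *: delta_mx r k).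
    apply: funext => y; rewrite [LHS]matrix_sum_delta !fct_sumE.
    by apply: eq_bigr => r _; rewrite fct_sumE.
  apply: differentiable_sum => r; apply: differentiable_sum => k.
  exact: differentiableZl.
split => // v.
rewrite -deriveE // derive_mx; last exact: diff_derivable.
by apply/matrixP => r k; rewrite !mxE deriveE.
Qed.


Section Stack.
Variables (M B : nat) (P : 'I_M.+1 -> nat).
Local Notation S := (\sum_(j < M.+1) P j)%N.
Definition Z0 := (fun k : 'I_M.+1 => (0 : 'M[R]_(P k, B))).

Definition Kj (j : 'I_M.+1) (A : 'M[R]_(P j, B)) : 'M[R]_(S, B) :=
  stack (dfwith Z0 j A).
Arguments Kj {j} A.

Lemma KjD j (A A' : 'M[R]_(P j, B)) : Kj (A + A') = Kj A + Kj A'.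
Proof.
have H i : dfwith Z0 j (A + A') i = dfwith Z0 j A i + dfwith Z0 j A' i.
  case: (eqVneq j i) => [<-|ne]; first by rewrite !dfwithin.
  by rewrite !dfwithout // addr0.
by rewrite /Kj /stack -mxcolD; apply: eq_mxcol => i; exact: H.
Qed.

Lemma KjZ j a (A : 'M[R]_(P j, B)) : Kj (a *: A) = a *: Kj A.
Proof.
rewrite /Kj /stack; apply/matrixP => r k; rewrite !mxE.
case: (eqVneq j (tagnat.sig1 r)) => [e|ne].
  move: (tagnat.sig2 r); rewrite -e => s.
  by rewrite !dfwithin mxE.
by rewrite !dfwithout // mxE mulr0.
Qed.

Lemma Kj0 j : @Kj j 0 = 0.
Proof. by rewrite -(scale0r (0 : 'M[R]_(P j, B))) KjZ scale0r. Qed.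

Lemma Kj_sum j (I : Type) (s : seq I) (F : I -> 'M[R]_(P j, B)) :
  Kj (\sum_(i <- s) F i) = \sum_(i <- s) Kj (F i).
Proof. exact: (big_morph _ (@KjD j) (Kj0 j)). Qed.

Lemma stack_sumK (E : forall j, 'M[R]_(P j, B)) :
  stack E = \sum_j Kj (E j).
Proof.
have H i : E i = \sum_j dfwith Z0 j (E j) i.
  rewrite (bigD1 i) //= dfwithin big1 ?addr0 // => j ne.
  by rewrite dfwithout.
by rewrite /Kj /stack -mxcol_sum; apply: eq_mxcol => i; exact: H.
Qed.

Lemma stack_edir (E : forall j, 'M[R]_(P j, B)) :
  stack E = \sum_j \sum_(b < P j) \sum_(k < B) E j b k *: @edir R M B P j b k.
Proof.
rewrite stack_sumK; apply: eq_bigr => j _.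
rewrite {1}(matrix_sum_delta (E j)) Kj_sum; apply: eq_bigr => b _.
by rewrite Kj_sum; apply: eq_bigr => k _; rewrite KjZ.
Qed.

Lemma stack_dfwith (Phi : forall j, 'M[R]_(P j, B)) m (A : 'M[R]_(P m, B)) :
  stack (dfwith Phi m A) = stack (dfwith Phi m 0) + Kj A.
Proof.
have H i : dfwith Phi m A i = dfwith Phi m 0 i + dfwith Z0 m A i.
  case: (eqVneq m i) => [<-|ne]; first by rewrite !dfwithin add0r.
  by rewrite !dfwithout // addr0.
by rewrite /Kj /stack -mxcolD; apply: eq_mxcol => i; exact: H.
Qed.

End Stack.
Arguments Kj {M B P j} A.


Section FBsec.
Variables (S B : nat) (Y : Type) (l : 'cV[R]_S -> Y -> R) (ys : 'I_B -> Y).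
Hypothesis ldiff : forall y v, differentiable (l^~ y) v.
Hypothesis ldiff2 : forall y (r : 'I_S) v,
  differentiable (fun w => 'D_(delta_mx r 0) (l^~ y) w) v.

Lemma col_aff (i : 'I_B) (e Z : 'M[R]_(S, B)) (h : R) :
  col i (h *: e + Z) = h *: col i e + col i Z.
Proof. by apply/matrixP => r k; rewrite !mxE. Qed.

Lemma col_diff (i : 'I_B) (Z : 'M[R]_(S, B)) : differentiable (col i) Z.
Proof.
have [] := @diff_mx _ _ _ (col i) Z; last by [].
move=> r k; have -> : (fun y : 'M[R]_(S, B) => col i y r k) = (fun y => y r i).
  by apply: funext => y; rewrite mxE.
exact: differentiable_coord.
Qed.

Lemma Dl_diff y (u : 'cV[R]_S) v : differentiable (fun w => 'D_u (l^~ y) w) v.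
Proof.
have -> : (fun w => 'D_u (l^~ y) w) =
   \sum_(r < S) (fun w => u r 0 *: 'D_(delta_mx r 0) (l^~ y) w).
  apply: funext => w; rewrite fct_sumE deriveE //.
  rewrite {1}(matrix_sum_delta u) linear_sum; apply: eq_bigr => r _.
  rewrite big_ord1 linearZ /= deriveE //.
apply: differentiable_sum => r.
exact: (@differentiableZ _ _ _ (fun w => 'D_(delta_mx r 0) (l^~ y) w)).
Qed.

Lemma FB_eq : FB l ys = B%:R^-1 \*o (\sum_(i < B) (fun Z => l (col i Z) (ys i))).
Proof. by apply: funext => Z; rewrite /FB /= fct_sumE. Qed.

Lemma lcol_derivable i Z e : derivable (fun Z => l (col i Z) (ys i)) Z e.
Proof.
have [_ H] := @derive_comp_aff _ _ _ (l^~ (ys i)) (col i) Z e (col i e) (col_aff i e Z).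
exact/H/diff_derivable.
Qed.

Lemma FB_derive Z e : 'D_e (FB l ys) Z =
  B%:R^-1 * \sum_(i < B) 'D_(col i e) (l^~ (ys i)) (col i Z).
Proof.
rewrite FB_eq deriveMl; last by apply: derivable_sum => i; exact: lcol_derivable.
rewrite derive_sum; last by move=> i; exact: lcol_derivable.
congr (_ * _); apply: eq_bigr => i _.
have [H _] := @derive_comp_aff _ _ _ (l^~ (ys i)) (col i) Z e (col i e) (col_aff i e Z).
exact: H.
Qed.

Lemma FB_diff Z : differentiable (FB l ys) Z.
Proof.
rewrite FB_eq.
have -> : B%:R^-1 \*o (\sum_(i < B) (fun Z => l (col i Z) (ys i))) =
  B%:R^-1 *: (\sum_(i < B) (fun Z => l (col i Z) (ys i))) by [].
apply: differentiableZ; apply: differentiable_sum => i.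
apply: (@differentiable_comp _ _ _ _ (col i) (l^~ (ys i))); [exact: col_diff | exact: ldiff].
Qed.

Lemma v_diff e Z : differentiable (fun Z => 'D_e (FB l ys) Z) Z.
Proof.
have -> : (fun Z => 'D_e (FB l ys) Z) =
  B%:R^-1 *: (\sum_(i < B) ((fun w => 'D_(col i e) (l^~ (ys i)) w) \o col i)).
  by apply: funext => W; rewrite FB_derive /= fct_sumE.
apply: differentiableZ; apply: differentiable_sum => i.
apply: differentiable_comp; first exact: col_diff.
exact: Dl_diff.
Qed.

End FBsec.


Lemma triple_sum (M B : nat) (P : 'I_M.+1 -> nat) (f : forall j, 'I_(P j) -> 'I_B -> R) :
  \sum_j \sum_(b < P j) \sum_(k < B) f j b k =
  \sum_(q : {j : 'I_M.+1 & 'I_(P j)} * 'I_B) f (tag q.1) (tagged q.1) q.2.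
Proof.
rewrite -(pair_big xpredT xpredT (fun p k => f (tag p) (tagged p) k)) /=.
exact: (@sig_big_dep _ _ _ _ (fun j => ordinal (P j)) xpredT (fun _ => xpredT)
  (fun j b => \sum_(k < B) f j b k)).
Qed.


Lemma hess_mvt (M B : nat) (P : 'I_M.+1 -> nat)
  (F : 'M[R]_(\sum_(j < M.+1) P j, B) -> R) (m : 'I_M.+1) (Hb : R)
  (vdiff : forall (a : 'I_(P m)) (i : 'I_B) Z,
     differentiable (fun Z => 'D_(@edir R M B P m a i) F Z) Z)
  (Hbound : forall Z, @hess_sqfrob R M B P F m Z <= Hb)
  (Psi : 'M[R]_(\sum_(j < M.+1) P j, B)) (E : forall j, 'M[R]_(P j, B)) :
  \sum_(a < P m) \sum_(i < B)
     ('D_(@edir R M B P m a i) F (Psi + stack E) - 'D_(@edir R M B P m a i) F Psi) ^+ 2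
   <= Hb * \sum_j \sum_(b < P j) \sum_(k < B) E j b k ^+ 2.
Proof.
pose v := fun a i Z => 'D_(@edir R M B P m a i) F Z.
pose u := fun a i => v a i (Psi + stack E) - v a i Psi.
pose U := \sum_(a < P m) \sum_(i < B) u a i ^+ 2.
pose N2 := \sum_j \sum_(b < P j) \sum_(k < B) E j b k ^+ 2.
suff key : U <= Hb * N2 by exact: key.
pose D := stack E.
pose line := fun t : R => Psi + t *: D.
have line_aff t h : line (h *: 1 + t) = h *: D + line t.
  by rewrite /line -[h *: 1]/(h * 1) mulr1 scalerDl addrCA.
have Dvl a i t := @derive_comp_aff _ _ _ (v a i) line t 1 D (line_aff t).
pose phi := \sum_(a < P m) \sum_(i < B) (u a i \*: (v a i \o line)).
have phiE t : phi t = \sum_(a < P m) \sum_(i < B) u a i * v a i (line t).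
  by rewrite /phi !fct_sumE; apply: eq_bigr => a _; rewrite fct_sumE.
have dv t a i : derivable (v a i \o line) t 1.
  by apply: (Dvl a i t).2; apply: diff_derivable; exact: vdiff.
have dphi t : derivable phi t 1.
  by apply: derivable_sum => a; apply: derivable_sum => i; apply: derivableZ; exact: dv.
have dphiE t : 'D_1 phi t = \sum_(a < P m) \sum_(i < B) u a i * 'D_D (v a i) (line t).
  rewrite /phi derive_sum; last first.
    by move=> a; apply: derivable_sum => i; apply: derivableZ; exact: dv.
  apply: eq_bigr => a _; rewrite derive_sum; last first.
    by move=> i; apply: derivableZ; exact: dv.
  apply: eq_bigr => i _; rewrite deriveZ; last exact: dv.
  by rewrite (Dvl a i t).1.
have cphi : {within `[0, 1], continuous phi}.
  apply: continuous_subspaceT => x; apply: differentiable_continuous.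
  exact/derivable1_diffP.
have [c _ Hc] := @MVT_segment R phi (fun t => 'D_1 phi t) 0 1 ler01
  (fun x _ => derivableP (dphi x)) cphi.
have H1 : phi 1 - phi 0 = U.
  rewrite !phiE /line scale1r scale0r addr0 -sumrB; apply: eq_bigr => a _.
  by rewrite -sumrB; apply: eq_bigr => i _; rewrite -mulrBr expr2.
pose w a i := 'D_D (v a i) (line c).
have H2 : U = \sum_(a < P m) \sum_(i < B) u a i * w a i.
  by rewrite -H1 Hc subr0 mulr1 dphiE.
have wE a i : w a i = \sum_j \sum_(b < P j) \sum_(k < B)
    E j b k * 'D_(@edir R M B P j b k) (v a i) (line c).
  rewrite /w deriveE; last exact: vdiff.
  rewrite /D stack_edir linear_sum; apply: eq_bigr => j _.
  rewrite linear_sum; apply: eq_bigr => b _.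
  rewrite linear_sum; apply: eq_bigr => k _.
  rewrite linearZ /= -deriveE //; exact: vdiff.
have wb a i : w a i ^+ 2 <= N2 * \sum_j \sum_(b < P j) \sum_(k < B)
    ('D_(@edir R M B P j b k) (v a i) (line c)) ^+ 2.
  rewrite wE /N2 !triple_sum; exact: CS.
have W1 : \sum_(a < P m) \sum_(i < B) w a i ^+ 2 <= N2 * Hb.
  apply: le_trans (ler_wpM2l _ (Hbound (line c))); last first.
    by rewrite /N2; do 3! (apply: sumr_ge0 => ? _); exact: sqr_ge0.
  rewrite /hess_sqfrob mulr_sumr; apply: ler_sum => a _.
  rewrite mulr_sumr; apply: ler_sum => i _; exact: wb.
have W2 : U ^+ 2 <= U * \sum_(a < P m) \sum_(i < B) w a i ^+ 2.
  rewrite {1}H2 /U !pair_big /=; exact: CS.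
have U0 : 0 <= U by rewrite /U; do 2! (apply: sumr_ge0 => ? _); exact: sqr_ge0.
have N0 : 0 <= N2 by rewrite /N2; do 3! (apply: sumr_ge0 => ? _); exact: sqr_ge0.
have Hb0 : 0 <= Hb.
  apply: le_trans (Hbound 0); rewrite /hess_sqfrob.
  by do 5! (apply: sumr_ge0 => ? _); exact: sqr_ge0.
have [Uz|Unz] := eqVneq U 0; first by rewrite Uz mulr_ge0.
have Upos : 0 < U by rewrite lt_def Unz U0.
have : U * U <= U * (Hb * N2).
  rewrite -expr2; apply: le_trans W2 _; rewrite ler_wpM2l // mulrC; exact: W1.
by rewrite ler_pM2l.
Qed.


Lemma lincomb (V W : normedModType R) (n1 n2 : nat) (k : 'I_n1 -> 'I_n2 -> V -> R)
  (w : 'I_n1 -> 'I_n2 -> W) (C : W) (x e : V) :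
  (forall a i, differentiable (k a i) x) ->
  differentiable (fun y => C + \sum_a \sum_i k a i y *: w a i) x /\
  'd (fun y => C + \sum_a \sum_i k a i y *: w a i) x e =
    \sum_a \sum_i 'D_e (k a i) x *: w a i.
Proof.
move=> kd.
have fE : (fun y => C + \sum_a \sum_i k a i y *: w a i) =
   cst C + \sum_a \sum_i (fun y => k a i y *: w a i).
  apply: funext => y /=; rewrite !fct_sumE; congr (_ + _).
  by apply: eq_bigr => a _; rewrite fct_sumE.
have dZ a i : differentiable (fun y => k a i y *: w a i) x by exact: differentiableZl.
have dS : differentiable (\sum_a \sum_i (fun y => k a i y *: w a i)) x.
  by apply: differentiable_sum => a; apply: differentiable_sum => i; exact: dZ.
have Df : differentiable (fun y => C + \sum_a \sum_i k a i y *: w a i) x.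
  by rewrite fE; apply: differentiableD => //; exact: differentiable_cst.
split => //.
rewrite -deriveE // fE deriveD; last first.
- exact: diff_derivable.
- exact: derivable_cst.
rewrite derive_cst add0r derive_sum; last first.
  by move=> a; apply: diff_derivable; apply: differentiable_sum => i; exact: dZ.
apply: eq_bigr => a _; rewrite derive_sum; last by move=> i; exact: diff_derivable.
apply: eq_bigr => i _; rewrite deriveE // diffZl // deriveE //.
Qed.


Lemma gradm_entry (M B : nat) (X : 'I_M.+1 -> Type) (Y : Type) (P D : 'I_M.+1 -> nat)
  (h : forall j, 'rV[R]_(pdim P D j) -> X j -> 'cV[R]_(P j))
  (l : 'cV[R]_(\sum_(j < M.+1) P j) -> Y -> R) (m : 'I_M.+1)
  (xs : 'I_B -> forall k, X k) (ys : 'I_B -> Y)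
  (Phi : forall j, 'M[R]_(P j, B)) (th : 'rV[R]_(pdim P D m)) (c : 'I_(pdim P D m)) :
  (forall y v, differentiable (l^~ y) v) ->
  (forall x th, differentiable (fun th' => h m th' x) th) ->
  gradm h l m xs ys Phi th 0 c =
  \sum_(a < P m) \sum_(i < B)
    'D_(@edir R M B P m a i) (FB l ys)
        (stack (dfwith Phi m (@batchEmb R M B X (P m) (pdim P D m) m (h m) th xs)))
    * ('D_(delta_mx 0 c) (fun th' => @batchEmb R M B X (P m) (pdim P D m) m (h m) th' xs) th) a i.
Proof.
move=> ldiff hdiff.
rewrite /gradm /grad mxE.
pose G := fun th' => @batchEmb R M B X (P m) (pdim P D m) m (h m) th' xs.
rewrite -/G.
have kd a i th0 : differentiable (fun th' => G th' a i) th0.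
  have -> : (fun th' => G th' a i) = (fun v : 'cV[R]_(P m) => v a 0) \o (fun th' => h m th' (xs i m)).
    by apply: funext => th'; rewrite /G /batchEmb /= mxE.
  apply: differentiable_comp => //; exact: differentiable_coord.
have LE : (fun th' => stack (dfwith Phi m (G th'))) =
  (fun th' => stack (dfwith Phi m 0) + \sum_(a < P m) \sum_(i < B) G th' a i *: @edir R M B P m a i).
  apply: funext => th'; rewrite stack_dfwith; congr (_ + _).
  rewrite {1}(matrix_sum_delta (G th')) Kj_sum; apply: eq_bigr => a _.
  by rewrite Kj_sum; apply: eq_bigr => i _; rewrite KjZ.
have [Ld Lder] := @lincomb _ _ _ _ (fun a i th' => G th' a i) (fun a i => @edir R M B P m a i)
   (stack (dfwith Phi m 0)) th (delta_mx 0 c) (fun a i => kd a i th).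
have Ld' : differentiable (fun th' => stack (dfwith Phi m (G th'))) th by rewrite LE.
have Lder' : 'd (fun th' => stack (dfwith Phi m (G th'))) th (delta_mx 0 c) =
   \sum_(a < P m) \sum_(i < B) 'D_(delta_mx 0 c) (fun th' => G th' a i) th *: @edir R M B P m a i.
  by rewrite LE Lder.
have -> : (fun th' => FB l ys (stack (dfwith Phi m (G th')))) =
   FB l ys \o (fun th' => stack (dfwith Phi m (G th'))) by [].
have FBd := @FB_diff _ _ _ l ys ldiff.
rewrite deriveE; last by apply: differentiable_comp.
rewrite diff_comp //= Lder' linear_sum; apply: eq_bigr => a _.
rewrite linear_sum; apply: eq_bigr => i _; rewrite linearZ /= -deriveE //.
rewrite mulrC; congr (_ * _).
rewrite derive_mx ?mxE //.
by apply/derivable_mxP => r k; apply: diff_derivable.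
Qed.


Lemma pointwise (M B : nat) (X : 'I_M.+1 -> Type) (Y : Type) (P D : 'I_M.+1 -> nat)
  (h : forall j, 'rV[R]_(pdim P D j) -> X j -> 'cV[R]_(P j))
  (l : 'cV[R]_(\sum_(j < M.+1) P j) -> Y -> R) (m : 'I_M.+1)
  (xs : 'I_B -> forall k, X k) (ys : 'I_B -> Y)
  (Phi1 Phi2 : forall j, 'M[R]_(P j, B)) (th : 'rV[R]_(pdim P D m)) (Hb Gb : R) :
  (forall y v, differentiable (l^~ y) v) ->
  (forall y (r : 'I_(\sum_(j < M.+1) P j)) v,
      differentiable (fun w => 'D_(delta_mx r 0) (l^~ y) w) v) ->
  (forall x th, differentiable (fun th' => h m th' x) th) ->
  (forall Z, @hess_sqfrob R M B P (FB l ys) m Z <= Hb) ->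
  jac_sqfrob (fun th' => @batchEmb R M B X (P m) (pdim P D m) m (h m) th' xs) th <= Gb ->
  sqfrob (gradm h l m xs ys Phi1 th - gradm h l m xs ys Phi2 th)
   <= Hb * Gb * \sum_(j < M.+1 | j != m) sqfrob (Phi1 j - Phi2 j).
Proof.
move=> ldiff ldiff2 hdiff Hbd Gbd.
pose G := fun th' => @batchEmb R M B X (P m) (pdim P D m) m (h m) th' xs.
pose v a i Z := 'D_(@edir R M B P m a i) (FB l ys) Z.
pose Psi1 := stack (dfwith Phi1 m (G th)).
pose Psi2 := stack (dfwith Phi2 m (G th)).
pose E := fun j => dfwith Phi1 m (G th) j - dfwith Phi2 m (G th) j.
have PsiE : Psi1 = Psi2 + stack E.
  by rewrite /Psi1 /Psi2 /E /stack mxcolB addrC subrK.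
pose u a i := v a i Psi1 - v a i Psi2.
pose J c := 'D_(delta_mx 0 c) G th.
pose U := \sum_(a < P m) \sum_(i < B) u a i ^+ 2.
have U0 : 0 <= U by rewrite /U; do 2! (apply: sumr_ge0 => ? _); exact: sqr_ge0.
have vdiff a i Z : differentiable (fun Z => v a i Z) Z.
  exact: (@v_diff _ _ _ l ys ldiff ldiff2).
have HU : U <= Hb * \sum_(j < M.+1 | j != m) sqfrob (Phi1 j - Phi2 j).
  have := @hess_mvt M B P (FB l ys) m Hb vdiff Hbd Psi2 E.
  rewrite -PsiE => /le_trans; apply.
  have Hb0 : 0 <= Hb.
    apply: le_trans (Hbd 0); rewrite /hess_sqfrob.
    by do 5! (apply: sumr_ge0 => ? _); exact: sqr_ge0.
  rewrite ler_wpM2l //.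
  have Em : E m = 0 by rewrite /E !dfwithin subrr.
  rewrite (bigD1 m) //=.
  rewrite [X in X + _](_ : _ = 0); last first.
    by apply: big1 => b _; apply: big1 => k _; rewrite Em mxE expr0n.
  rewrite add0r le_eqVlt; apply/orP; left; apply/eqP.
  apply: eq_bigr => j ne.
  by rewrite /E !dfwithout // eq_sym.
have Gb0 : 0 <= Gb.
  apply: le_trans Gbd; rewrite /jac_sqfrob /sqfrob.
  by do 3! (apply: sumr_ge0 => ? _); exact: sqr_ge0.
have gE c : (gradm h l m xs ys Phi1 th - gradm h l m xs ys Phi2 th) 0 c =
   \sum_(a < P m) \sum_(i < B) u a i * J c a i.
  rewrite mxE [X in _ + X]mxE !gradm_entry // -sumrB; apply: eq_bigr => a _.
  by rewrite -sumrB; apply: eq_bigr => i _; rewrite -mulrBl.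
rewrite /sqfrob big_ord1.
apply: (@le_trans _ _ (U * Gb)); last first.
  by rewrite mulrAC ler_wpM2r.
apply: (@le_trans _ _ (U * jac_sqfrob G th)); last by rewrite ler_wpM2l.
rewrite /jac_sqfrob mulr_sumr; apply: ler_sum => c _.
rewrite gE /U /sqfrob !pair_big /=; exact: CS.
Qed.


Lemma le_integral_nm d (T : measurableType d) (mu : measure T R) (f g : T -> \bar R) :
  (forall x, (0 <= f x)%E) -> (forall x, (f x <= g x)%E) ->
  (\int[mu]_x f x <= \int[mu]_x g x)%E.
Proof.
move=> f0 fg.
rewrite !ge0_integralE //; last by move=> x _; apply: le_trans (f0 x) (fg x).
apply: le_ereal_sup => _ [hh hf <-]; exists hh => // x.
apply: le_trans (hf x) _; rewrite /patch; case: ifP => _ //.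
Qed.

End Helpers.

Theorem lemma1 (R : realType) (d : measure_display) (Omega : measurableType d)
  (Pr : probability Omega R)
  (M B N Q : nat) (hB : (0 < B)%N) (hQ : (0 < Q)%N)
  (P D : 'I_M.+1 -> nat) (X : 'I_M.+1 -> Type) (Y : Type)
  (h : forall j, 'rV[R]_(pdim P D j) -> X j -> 'cV[R]_(P j))
  (h_server : forall (th : 'rV[R]_(P ord0)) (x : X ord0), h ord0 th x = th^T)
  (l : 'cV[R]_(\sum_(j < M.+1) P j) -> Y -> R)
  (xdat : 'I_N -> forall j, X j) (ydat : 'I_N -> Y)
  (H G : 'I_M.+1 -> R)
  (l_diff : forall y v, differentiable (l^~ y) v)
  (l_diff2 : forall y (r : 'I_(\sum_(j < M.+1) P j)) v,
      differentiable (fun w => derive (l^~ y) w (delta_mx r 0)) v)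
  (h_diff : forall j x th, differentiable (fun th' => h j th' x) th)
  (H_pos : forall m, 0 < H m) (G_pos : forall m, 0 < G m)
  (A4 : forall (b : 'I_B -> 'I_N) m Phi,
      Num.sqrt (hess_sqfrob (FB l (fun i => ydat (b i))) m Phi) <= H m)
  (A5 : forall (b : 'I_B -> 'I_N) m th,
      Num.sqrt (jac_sqfrob
        (fun th' => @batchEmb R M B X (P m) (pdim P D m) m (h m) th' (fun i => xdat (b i))) th)
      <= G m)
  (bat : nat -> Omega -> 'I_B -> 'I_N)
  (C : forall j : 'I_M.+1, nat -> Omega -> 'cV[R]_(P j) -> 'cV[R]_(P j))
  (eta : nat -> R)
  (theta : forall j, nat -> Omega -> 'rV[R]_(pdim P D j))
  (update : forall m t w,
      theta m t.+1 w = theta m t w - eta (t - t %% Q)%N *: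
        gradm h l m (fun i => xdat (bat (t - t %% Q)%N w i)) (fun i => ydat (bat (t - t %% Q)%N w i))
          (embC h xdat bat C theta (t - t %% Q)%N w) (theta m t w))
  (eps_meas : forall j t0, (t0 %% Q = 0)%N ->
      measurable_fun setT (fun w => sqfrob (embC h xdat bat C theta t0 w j
                                            - embU h xdat bat theta t0 w j)))
  : forall (t : nat) (m : 'I_M.+1),
    let t0 := (t - t %% Q)%N in
    (\int[Pr]_w (sqfrob
        (gradm h l m (fun i => xdat (bat t0 w i)) (fun i => ydat (bat t0 w i))
           (embC h xdat bat C theta t0 w) (theta m t w)
         - gradm h l m (fun i => xdat (bat t0 w i)) (fun i => ydat (bat t0 w i))
           (embU h xdat bat theta t0 w) (theta m t w)))%:E
     <= (H m ^+ 2 * G m ^+ 2)%:E *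
        \sum_(j < M.+1 | j != m)
          \int[Pr]_w (sqfrob (embC h xdat bat C theta t0 w j - embU h xdat bat theta t0 w j))%:E)%E.
Proof.
move=> t m; rewrite /=.
set t0 := (t - t %% Q)%N.
have ht0 : (t0 %% Q = 0)%N.
  by rewrite /t0 {1}(divn_eq t Q) addnK modnMl.
pose c := H m ^+ 2 * G m ^+ 2.
have c0 : 0 <= c by rewrite /c mulr_ge0 // sqr_ge0.
pose sq j w := sqfrob (embC h xdat bat C theta t0 w j - embU h xdat bat theta t0 w j).
have sq0 j w : 0 <= sq j w.
  by rewrite /sq /sqfrob; do 2! (apply: sumr_ge0 => ? _); exact: sqr_ge0.
have msq j : measurable_fun [set: Omega] (EFin \o sq j : Omega -> \bar R).
  exact/measurable_EFinP/eps_meas.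
rewrite ge0_sume_distrr; last by move=> j _; apply: integral_ge0 => w _; rewrite lee_fin; exact: (sq0 j w).
rewrite -big_filter.
have step j : ((H m ^+ 2 * G m ^+ 2)%:E * \int[Pr]_w (sq j w)%:E =
    \int[Pr]_w ((H m ^+ 2 * G m ^+ 2)%:E * (sq j w)%:E))%E.
  rewrite (ge0_integralZl_EFin _ _ _ (msq j)) //.
  by move=> w _; rewrite lee_fin.
under eq_bigr => j _ do rewrite step.
have nn : forall (n : 'I_M.+1) (x : Omega), [set: Omega]%classic x ->
    (0 <= (H m ^+ 2 * G m ^+ 2)%:E * (sq n x)%:E)%E.
  by move=> j w _; rewrite -EFinM lee_fin mulr_ge0.
have mm : forall n : 'I_M.+1, measurable_fun [set: Omega]
    (fun x : Omega => ((H m ^+ 2 * G m ^+ 2)%:E * (sq n x)%:E)%E).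
  by move=> j; exact: (measurable_funeM _ (msq j)).
rewrite -ge0_integral_sum //.
apply: le_integral_nm => w.
  by rewrite lee_fin /sqfrob; do 2! (apply: sumr_ge0 => ? _); exact: sqr_ge0.
under eq_bigr do rewrite -EFinM.
rewrite sumEFin lee_fin big_filter -mulr_sumr.
have sqrt_le (x y : R) : 0 <= x -> 0 < y -> Num.sqrt x <= y -> x <= y ^+ 2.
  move=> x0 y0 sxy; rewrite -(sqr_sqrtr x0).
  by rewrite lerXn2r // ?nnegrE ?sqrtr_ge0 // ltW.
apply: pointwise.
all: try exact: l_diff.
all: try exact: l_diff2.
all: try exact: h_diff.
- move=> Z; apply: (sqrt_le _ _ _ (H_pos m) (A4 (bat t0 w) m Z)).
  by rewrite /hess_sqfrob; do 5! (apply: sumr_ge0 => ? _); exact: sqr_ge0.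
- apply: (sqrt_le _ _ _ (G_pos m) (A5 (bat t0 w) m (theta m t w))).
  by rewrite /jac_sqfrob /sqfrob; do 3! (apply: sumr_ge0 => ? _); exact: sqr_ge0.
Qed.
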